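(* Let $C$ be the cube in $\mathbb{R}^3$, with its $8$ vertices and $12$ edges, and let $G_C$ be its rotation group (isomorphic to $S_4$, of order $24$). The number of $G_C$-orbits of incomplete open cubes (as defined in the context) is exactly $122$.
   Context: Let $P$ be a convex polyhedron in $\mathbb{R}^3$ with vertex set $V$ and edge set $E$ (each edge a pair of vertices). For a subset $S\subseteq E$, let $V(S)$ be the set of vertices incident to at least one edge of $S$, and let $\Gamma(S)$ be the graph with vertex set $V(S)$ and edge set $S$. An incomplete open $P$ is a subset $S\subseteq E$ such that: (i) $S\neq\emptyset$ and $S\neq E$; (ii) $\Gamma(S)$ is connected; (iii) $S$ is non-planar, i.e. the points of $V(S)$ (as points of $\mathbb{R}^3$) are not all contained in a single affine plane. The rotation group of $P$ (orientation-preserving isometries of $\mathbb{R}^3$ mapping $P$ to itself) permutes $V$ and $E$, and hence acts on subsets of $E$; this action preserves the property of being an incomplete open $P$. Incomplete open $P$ are counted up to this action, i.e. one counts orbits; two mirror-image subsets not related by a rotation are counted separately. *)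

(* Defs.v *)
From mathcomp Require Import all_boot all_order all_algebra.
From mathcomp Require Import reals.
Set Implicit Arguments. Unset Strict Implicit. Unset Printing Implicit Defensive.
Import Order.TTheory GRing.Theory Num.Theory.
Local Open Scope ring_scope.

(* Vertices of the cube: sign patterns in {+1,-1}^3. *)
Definition cvert := {ffun 'I_3 -> bool}.

Definition cpt (R : realType) (v : cvert) : 'rV[R]_3 :=
  \row_(i < 3) (if v i then 1 else -1).

Definition cube_edges : {set {set cvert}} :=
  [set [set u; v] | u in cvert, v in cvert & #|[set i | u i != v i]| == 1%N].

Definition Vof (S : {set {set cvert}}) : {set cvert} := \bigcup_(e in S) e.

Definition Gamma_connected (S : {set {set cvert}}) : Prop :=
  forall u v, u \in Vof S -> v \in Vof S ->
    connect (fun x y => [set x; y] \in S) u v.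

Definition planar (R : realType) (S : {set {set cvert}}) : Prop :=
  exists (a : 'rV[R]_3) (d : R), a != 0 /\
    forall v, v \in Vof S -> \sum_(i < 3) a 0 i * cpt R v 0 i = d.

Definition incomplete_open (R : realType) (S : {set {set cvert}}) : Prop :=
  [/\ S \subset cube_edges, S != set0, S != cube_edges,
      Gamma_connected S & ~ planar R S].

Definition is_SO3 (R : realType) (Q : 'M[R]_3) : Prop :=
  Q *m Q^T = 1%:M /\ \det Q = 1.

(* The isometry maps the cube to itself (equivalently, its vertex set to itself). *)
Definition cube_rotation (R : realType) (Q : 'M[R]_3) (t : 'rV[R]_3) : Prop :=
  is_SO3 Q /\ forall v, exists w, cpt R w = cpt R v *m Q + t.

Definition rot_img (R : realType) (Q : 'M[R]_3) (t : 'rV[R]_3)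
  (e : {set cvert}) : {set cvert} :=
  [set w | [exists u in e, cpt R w == cpt R u *m Q + t]].

Definition same_orbit (R : realType) (S S' : {set {set cvert}}) : Prop :=
  exists (Q : 'M[R]_3) (t : 'rV[R]_3),
    cube_rotation Q t /\ S' = [set rot_img Q t e | e in S].

(* Main.v *)
Require Import Defs.
From mathcomp Require Import all_boot all_order all_algebra.
From mathcomp Require Import reals.
From mathcomp Require Import ring lra.
Set Implicit Arguments. Unset Strict Implicit. Unset Printing Implicit Defensive.
Import Order.TTheory GRing.Theory Num.Theory.
Local Open Scope ring_scope.

Definition bit (n j : nat) : bool := odd (n %/ 2 ^ j).
Definition vtx (n : nat) : cvert := [ffun j : 'I_3 => bit n j].
Definition o0 : 'I_3 := @Ordinal 3 0 isT.
Definition o1 : 'I_3 := @Ordinal 3 1 isT.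
Definition o2 : 'I_3 := @Ordinal 3 2 isT.
Definition unvtx (u : cvert) : nat := (u o0 + 2 * u o1 + 4 * u o2)%N.

Lemma ord3P (i : 'I_3) : [\/ i = o0, i = o1 | i = o2].
Proof.
case: i => [[|[|[|]]] H] //.
- by constructor 1; apply: val_inj.
- by constructor 2; apply: val_inj.
- by constructor 3; apply: val_inj.
Qed.

Lemma vtxK n : (n < 8)%N -> unvtx (vtx n) = n.
Proof.
move: n; do 8 (case; first by rewrite /unvtx !ffunE). by [].
Qed.

Lemma unvtxK u : vtx (unvtx u) = u.
Proof.
apply/ffunP => j; rewrite ffunE /unvtx.
case: (ord3P j) => ->; by move: (u o0) (u o1) (u o2) => [] [] [].
Qed.

Lemma unvtx_lt u : (unvtx u < 8)%N.
Proof. rewrite /unvtx; by move: (u o0) (u o1) (u o2) => [] [] []. Qed.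

Lemma vtx_inj m n : (m < 8)%N -> (n < 8)%N -> vtx m = vtx n -> m = n.
Proof. by move=> hm hn e; rewrite -(vtxK hm) -(vtxK hn) e. Qed.

Lemma eq_vtx m n : (m < 8)%N -> (n < 8)%N -> (vtx m == vtx n) = (m == n).
Proof.
move=> hm hn; apply/eqP/eqP => [|->] //; exact: vtx_inj.
Qed.

Lemma cvert_ind (P : cvert -> Prop) : (forall n, (n < 8)%N -> P (vtx n)) -> forall u, P u.
Proof. by move=> H u; rewrite -(unvtxK u); apply: H; apply: unvtx_lt. Qed.

Lemma sum3 (V : nmodType) (F : 'I_3 -> V) : \sum_(i < 3) F i = F o0 + F o1 + F o2.
Proof.
rewrite !big_ord_recr big_ord0 /= add0r.
congr (F _ + F _ + F _); exact: val_inj.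
Qed.

Lemma forall_lt (P : nat -> bool) N : all P (iota 0 N) -> forall k, (k < N)%N -> P k.
Proof. by move=> /allP H k lt; apply: H; rewrite mem_iota. Qed.
Definition E12 : seq (nat * nat) := [:: (0,1); (2,3); (4,5); (6,7); (0,2); (1,3); (4,6); (5,7); (0,4); (1,5); (2,6); (3,7)].
Definition ea k := (nth (0,0)%N E12 k).1.
Definition eb k := (nth (0,0)%N E12 k).2.
Definition edge (k : nat) : {set cvert} := [set vtx (ea k); vtx (eb k)].
Definition toS (m : seq bool) : {set {set cvert}} :=
  [set edge k | k : 'I_12 & nth false m k].
Definition memb k c := (c == ea k) || (c == eb k).

Lemma ea_lt k : (k < 12)%N -> (ea k < 8)%N.
Proof. exact: (forall_lt (P := fun k => ea k < 8)%N). Qed.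
Lemma eb_lt k : (k < 12)%N -> (eb k < 8)%N.
Proof. exact: (forall_lt (P := fun k => eb k < 8)%N). Qed.

Lemma mem_edge c k : (c < 8)%N -> (k < 12)%N -> (vtx c \in edge k) = memb k c.
Proof.
by move=> hc hk; rewrite !inE !eq_vtx ?ea_lt ?eb_lt.
Qed.

Lemma edge_inj k k' : (k < 12)%N -> (k' < 12)%N -> edge k = edge k' -> k = k'.
Proof.
move=> hk hk' e.
have H : forall c, (c < 8)%N -> memb k c = memb k' c.
  by move=> c hc; rewrite -!mem_edge // e.
have chk : all (fun k => all (fun k' =>
   all (fun c => memb k c == memb k' c) (iota 0 8) ==> (k == k')) (iota 0 12)) (iota 0 12) by [].
have := forall_lt chk hk => /(forall_lt)/(_ _ hk') /implyP; apply: (fun h => _).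
move=> h; apply/eqP; apply: h; apply/allP => c; rewrite mem_iota /= => hc.
by rewrite H.
Qed.

Lemma mem_toS m k : (k < 12)%N -> (edge k \in toS m) = nth false m k.
Proof.
move=> hk; apply/imsetP/idP => [[k' hk' e]|h].
  rewrite inE in hk'; by rewrite (edge_inj hk (ltn_ord k') e).
by exists (Ordinal hk); rewrite ?inE.
Qed.

Lemma toSP m e : reflect (exists2 k, (k < 12)%N /\ nth false m k & e = edge k) (e \in toS m).
Proof.
apply: (iffP imsetP) => [[k hk ->]|[k [hk hm] ->]].
  by exists k => //; split => //; move: hk; rewrite inE.
by exists (Ordinal hk); rewrite ?inE.
Qed.
Lemma card3 (P : pred 'I_3) : #|[set i | P i]| = (P o0 + P o1 + P o2)%N.
Proof.
rewrite -sum1_card big_mkcond /= sum3 !inE.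
by case: (P o0); case: (P o1); case: (P o2).
Qed.

Lemma edge_cube k : (k < 12)%N -> edge k \in cube_edges.
Proof.
move=> hk; apply/imset2P; exists (vtx (ea k)) (vtx (eb k)) => //.
rewrite !inE /= card3 !ffunE /=.
have chk : all (fun k => ((bit (ea k) 0 != bit (eb k) 0) + (bit (ea k) 1 != bit (eb k) 1)
   + (bit (ea k) 2 != bit (eb k) 2) == 1)%N) (iota 0 12) by [].
exact: (forall_lt chk hk).
Qed.

Lemma cube_sub e : e \in cube_edges -> exists2 k, (k < 12)%N & e = edge k.
Proof.
case/imset2P => u v _; rewrite inE /= => + ->; move: u v.
apply: cvert_ind => a ha; apply: cvert_ind => b hb.
rewrite card3 !ffunE /=.
have chk : all (fun a => all (fun b => ((bit a 0 != bit b 0) + (bit a 1 != bit b 1)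
   + (bit a 2 != bit b 2) == 1)%N ==> has (fun k => (ea k == a) && (eb k == b) ||
      (ea k == b) && (eb k == a)) (iota 0 12)) (iota 0 8)) (iota 0 8) by [].
move/(implyP (forall_lt (forall_lt chk ha) hb)) => /hasP [k]; rewrite mem_iota /= => hk.
case/orP=> /andP [/eqP ea_ /eqP eb_]; exists k => //; rewrite /edge ea_ eb_ //.
by rewrite setUC.
Qed.
Definition maskOf (S : {set {set cvert}}) : seq bool := [seq edge k \in S | k <- iota 0 12].

Lemma nth_maskOf (S : {set {set cvert}}) k : (k < 12)%N -> nth false (maskOf S) k = (edge k \in S).
Proof. by move=> hk; rewrite (nth_map 0%N) ?size_iota // nth_iota. Qed.

Lemma toS_maskOf (S : {set {set cvert}}) : S \subset cube_edges -> S = toS (maskOf S).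
Proof.
move=> /subsetP sub; apply/setP => e; apply/idP/idP.
  move=> eS; case: (cube_sub (sub _ eS)) => k hk ee.
  by apply/toSP; exists k; rewrite ?nth_maskOf -?ee.
by case/toSP => k [hk]; rewrite nth_maskOf // => h ->.
Qed.

Fixpoint masks n : seq (seq bool) :=
  if n is n'.+1 then [seq b :: s | b <- [:: true; false], s <- masks n'] else [:: [::]].

Lemma masks_size s : s \in masks (size s).
Proof.
elim: s => [|b s IH] //=.
by rewrite mem_cat; case: b; [apply/orP; left|apply/orP; right]; rewrite ?cats0 map_f.
Qed.

Lemma size_maskOf (S : {set {set cvert}}) : size (maskOf S) = 12%N.
Proof. by rewrite size_map size_iota. Qed.

Definition Vn m c := has (fun k => nth false m k && memb k c) (iota 0 12).

Lemma mem_Vof m c : (c < 8)%N -> (vtx c \in Vof (toS m)) = Vn m c.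
Proof.
move=> hc; apply/bigcupP/hasP => [[e /toSP [k [hk hm] ->]]|[k]].
  by rewrite mem_edge // => hmem; exists k; rewrite ?mem_iota ?hm.
rewrite mem_iota /= => hk /andP [hm hmem]; exists (edge k); last by rewrite mem_edge.
by apply/toSP; exists k.
Qed.

Definition edl m := [seq nth (0,0)%N E12 k | k <- [seq k <- iota 0 12 | nth false m k]].
Definition relL (el : seq (nat * nat)) d c :=
  has (fun p => ((p.1 == d) && (p.2 == c)) || ((p.1 == c) && (p.2 == d))) el.

Lemma relL_toS m d c : relL (edl m) d c -> [set vtx d; vtx c] \in toS m.
Proof.
case/hasP => p /mapP [k]; rewrite mem_filter mem_iota => /andP [hm /andP [_ hk]] -> {p}.
case/orP => /andP [/eqP <- /eqP <-]; apply/toSP; exists k => //; by rewrite /edge // setUC.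
Qed.

Definition hask m := has (fun k => nth false m k) (iota 0 12).
Definition allk m := all (fun k => nth false m k) (iota 0 12).
Definition root m := head 0%N [seq c <- iota 0 8 | Vn m c].
Fixpoint reachL (el : seq (nat * nat)) (rt : nat) n : seq nat :=
  if n is n'.+1 then let r := reachL el rt n' in
    r ++ [seq c <- iota 0 8 | (c \notin r) && has (fun d => relL el d c) r]
  else [:: rt].
Definition reach m n := reachL (edl m) (root m) n.
Lemma reachS m n : reach m n.+1 =
  reach m n ++ [seq c <- iota 0 8 | (c \notin reach m n) && has (fun d => relL (edl m) d c) (reach m n)].
Proof. by []. Qed.
Global Opaque reach.

Definition conn_b' m (r : seq nat) := all (fun c => Vn m c ==> (c \in r)) (iota 0 8).
Definition closedE' m (r : seq nat) := all (fun k => nth false m k ==>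
  ((ea k \in r) == (eb k \in r))) (iota 0 12).
Definition conn_b m := conn_b' m (reach m 8).
Definition closedE m := closedE' m (reach m 8).

Definition erel (S : {set {set cvert}}) := fun x y => [set x; y] \in S.

Lemma erel_sym (S : {set {set cvert}}) : symmetric (erel S).
Proof. by move=> x y; rewrite /erel setUC. Qed.

Lemma reach_conn m n c : c \in reach m n -> connect (erel (toS m)) (vtx (root m)) (vtx c).
Proof.
elim: n c => [|n IH] c; first by rewrite /= inE => /eqP ->; exact: connect0.
rewrite reachS mem_cat => /orP [/IH //|]; rewrite mem_filter => /andP [/andP [_ /hasP [d hd hr]] _].
apply: connect_trans (IH _ hd) _; apply: connect1; exact: relL_toS.
Qed.

Lemma conn_ok m : conn_b m -> Gamma_connected (toS m).
Proof.
move=> hc u v; move: u v; apply: cvert_ind => a ha; apply: cvert_ind => b hb.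
rewrite !mem_Vof // => va vb.
have ra := implyP (forall_lt hc ha) va; have rb := implyP (forall_lt hc hb) vb.
apply: connect_trans (reach_conn rb).
by rewrite (sym_connect_sym (@erel_sym _)); exact: reach_conn ra.
Qed.

Lemma root_reach m n : root m \in reach m n.
Proof. by elim: n => [|n IH]; rewrite ?inE // reachS mem_cat IH. Qed.

Lemma conn_need m : closedE m -> (hask m ==> Vn m (root m)) -> hask m ->
  Gamma_connected (toS m) -> conn_b m.
Proof.
move=> hcl hr hk gc; apply/allP => c; rewrite mem_iota /= => hc; apply/implyP => vc.
have hroot : (root m < 8)%N.
  move: (implyP hr hk); rewrite /root.
  case E: [seq c <- iota 0 8 | Vn m c] => [|x s] //= _.
  have : x \in [seq c <- iota 0 8 | Vn m c] by rewrite E mem_head.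
  by rewrite mem_filter mem_iota => /andP [_ /andP [_ ->]].
pose C := [set u | unvtx u \in reach m 8].
have clo : closed (erel (toS m)) (mem C).
  move=> x y /toSP [k [hk' hm] ex].
  have hx : x \in edge k by rewrite -ex setU11.
  have hy : y \in edge k by rewrite -ex setU1r ?set11.
  have := implyP (forall_lt hcl hk') hm => /eqP hab.
  rewrite !in_set2 in hx hy.
  by case/orP: hx => /eqP ->; case/orP: hy => /eqP ->; rewrite !in_set !vtxK ?ea_lt ?eb_lt.
have := closed_connect clo (gc (vtx (root m)) (vtx c) _ _).
rewrite !in_set !vtxK // root_reach => <- //.
- by rewrite mem_Vof ?(implyP hr hk).
- by rewrite mem_Vof.
Qed.
Definition dirs3 m := all (fun i => has (fun k => nth false m k && (k %/ 4 == i)%N) (iota 0 12)) (iota 0 3).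
Definition planarcert m := has (fun i => has (fun s =>
   all (fun c => Vn m c ==> (bit c i == s)) (iota 0 8)) [:: true; false]) (iota 0 3).

Section Pl.
Variable R : realType.

Lemma sumcpt (a : 'rV[R]_3) v : \sum_(i < 3) a 0 i * cpt R v 0 i =
  a 0 o0 * (if v o0 then 1 else -1) + a 0 o1 * (if v o1 then 1 else -1)
  + a 0 o2 * (if v o2 then 1 else -1).
Proof. by rewrite sum3 !mxE. Qed.

Lemma edge_eq (a : 'rV[R]_3) d k : (k < 12)%N ->
  \sum_(i < 3) a 0 i * cpt R (vtx (ea k)) 0 i = d ->
  \sum_(i < 3) a 0 i * cpt R (vtx (eb k)) 0 i = d ->
  [/\ (k %/ 4 = 0)%N -> a 0 o0 = 0, (k %/ 4 = 1)%N -> a 0 o1 = 0 & (k %/ 4 = 2)%N -> a 0 o2 = 0].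
Proof.
rewrite !sumcpt !ffunE.
move: k; do 12 (case; first by move=> _ /= h1 h2; split => // _; lra).
by [].
Qed.

Lemma nonplanar_ok m : dirs3 m -> ~ planar R (toS m).
Proof.
move=> hd [a [d [an0 H]]].
have key : forall i, (i < 3)%N -> exists2 k, (k < 12)%N & (k %/ 4 = i)%N /\
   [/\ (k %/ 4 = 0)%N -> a 0 o0 = 0, (k %/ 4 = 1)%N -> a 0 o1 = 0 & (k %/ 4 = 2)%N -> a 0 o2 = 0].
  move=> i hi; case/hasP: (forall_lt hd hi) => k; rewrite mem_iota /= => hk /andP [hm /eqP hki].
  exists k => //; split => //; apply: (edge_eq (d := d)) => //; apply: H; rewrite mem_Vof ?ea_lt ?eb_lt //;
  by apply/hasP; exists k; rewrite ?mem_iota // hm /memb eqxx ?orbT.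
case: (key 0%N isT) => k0 _ [e0 [h0 _ _]]; case: (key 1%N isT) => k1 _ [e1 [_ h1 _]];
case: (key 2%N isT) => k2 _ [e2 [_ _ h2]].
move: an0; have -> : a = 0; last by rewrite eqxx.
apply/rowP => j; rewrite mxE; case: (ord3P j) => ->; [exact: h0|exact: h1|exact: h2].
Qed.

Lemma planar_cert m : planarcert m -> planar R (toS m).
Proof.
move=> /hasP [i]; rewrite mem_iota => /andP [_ hi] hh.
have [s hs] : exists s, all (fun c => Vn m c ==> (bit c i == s)) (iota 0 8).
  by move: hh => /= /orP [h|/orP [h|//]]; [exists true|exists false].
exists (\row_(j < 3) (if val j == i then 1 else 0)), (if s then 1 else -1); split.
  apply/eqP => /rowP /(_ (Ordinal hi)); rewrite !mxE eqxx => /eqP; rewrite oner_eq0 //.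
apply: cvert_ind => c hc; rewrite mem_Vof // => vc.
have /eqP bc := implyP (forall_lt hs hc) vc.
rewrite sum3 !mxE !ffunE.
case: i hi bc {hs hh} => [|[|[|]]] // _ <- /=; ring.
Qed.
End Pl.
Definition rotQ : seq (seq nat) := [:: [:: 0; 1; 2]; [:: 0; 1; 2]; [:: 0; 1; 2]; [:: 0; 1; 2]; [:: 0; 2; 1]; [:: 0; 2; 1]; [:: 0; 2; 1]; [:: 0; 2; 1]; [:: 1; 0; 2]; [:: 1; 0; 2]; [:: 1; 0; 2]; [:: 1; 0; 2]; [:: 1; 2; 0]; [:: 1; 2; 0]; [:: 1; 2; 0]; [:: 1; 2; 0]; [:: 2; 0; 1]; [:: 2; 0; 1]; [:: 2; 0; 1]; [:: 2; 0; 1]; [:: 2; 1; 0]; [:: 2; 1; 0]; [:: 2; 1; 0]; [:: 2; 1; 0]].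
Definition rotS : seq (seq bool) := [:: [:: false; false; true]; [:: false; true; false]; [:: true; false; false]; [:: true; true; true]; [:: false; false; false]; [:: false; true; true]; [:: true; false; true]; [:: true; true; false]; [:: false; false; false]; [:: false; true; true]; [:: true; false; true]; [:: true; true; false]; [:: false; false; true]; [:: false; true; false]; [:: true; false; false]; [:: true; true; true]; [:: false; false; true]; [:: false; true; false]; [:: true; false; false]; [:: true; true; true]; [:: false; false; false]; [:: false; true; true]; [:: true; false; true]; [:: true; true; false]].
Definition rotP : seq (seq nat) := [:: [:: 0; 1; 2]; [:: 0; 1; 2]; [:: 0; 1; 2]; [:: 0; 1; 2]; [:: 0; 2; 1]; [:: 0; 2; 1]; [:: 0; 2; 1]; [:: 0; 2; 1]; [:: 1; 0; 2]; [:: 1; 0; 2]; [:: 1; 0; 2]; [:: 1; 0; 2]; [:: 2; 0; 1]; [:: 2; 0; 1]; [:: 2; 0; 1]; [:: 2; 0; 1]; [:: 1; 2; 0]; [:: 1; 2; 0]; [:: 1; 2; 0]; [:: 1; 2; 0]; [:: 2; 1; 0]; [:: 2; 1; 0]; [:: 2; 1; 0]; [:: 2; 1; 0]].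
Definition ginvT : seq (seq nat) := [:: [:: 1; 0; 3; 2; 5; 4; 7; 6; 11; 10; 9; 8]; [:: 2; 3; 0; 1; 7; 6; 5; 4; 9; 8; 11; 10]; [:: 3; 2; 1; 0; 6; 7; 4; 5; 10; 11; 8; 9]; [:: 0; 1; 2; 3; 4; 5; 6; 7; 8; 9; 10; 11]; [:: 3; 1; 2; 0; 11; 10; 9; 8; 7; 6; 5; 4]; [:: 0; 2; 1; 3; 9; 8; 11; 10; 5; 4; 7; 6]; [:: 1; 3; 0; 2; 10; 11; 8; 9; 4; 5; 6; 7]; [:: 2; 0; 3; 1; 8; 9; 10; 11; 6; 7; 4; 5]; [:: 7; 6; 5; 4; 3; 2; 1; 0; 11; 9; 10; 8]; [:: 5; 4; 7; 6; 0; 1; 2; 3; 9; 11; 8; 10]; [:: 4; 5; 6; 7; 1; 0; 3; 2; 10; 8; 11; 9]; [:: 6; 7; 4; 5; 2; 3; 0; 1; 8; 10; 9; 11]; [:: 5; 7; 4; 6; 11; 9; 10; 8; 1; 0; 3; 2]; [:: 7; 5; 6; 4; 9; 11; 8; 10; 2; 3; 0; 1]; [:: 6; 4; 7; 5; 10; 8; 11; 9; 3; 2; 1; 0]; [:: 4; 6; 5; 7; 8; 10; 9; 11; 0; 1; 2; 3]; [:: 11; 10; 9; 8; 1; 3; 0; 2; 5; 7; 4; 6]; [:: 9; 8; 11; 10; 2; 0; 3; 1; 7; 5; 6; 4]; [:: 10; 11; 8; 9; 3; 1; 2; 0; 6; 4; 7; 5]; [:: 8; 9; 10; 11; 0; 2;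 1; 3; 4; 6; 5; 7]; [:: 11; 9; 10; 8; 7; 5; 6; 4; 3; 1; 2; 0]; [:: 9; 11; 8; 10; 5; 7; 4; 6; 0; 2; 1; 3]; [:: 10; 8; 11; 9; 4; 6; 5; 7; 1; 3; 0; 2]; [:: 8; 10; 9; 11; 6; 4; 7; 5; 2; 0; 3; 1]].
Definition qn g j := nth 0%N (nth [::] rotQ g) j.
Definition sn g i := nth false (nth [::] rotS g) i.
Definition pn g i := nth 0%N (nth [::] rotP g) i.
Definition gv g c : nat := ((bit c (qn g 0) == sn g (qn g 0)) + 2 * (bit c (qn g 1) == sn g (qn g 1))
  + 4 * (bit c (qn g 2) == sn g (qn g 2)))%N.
Definition ginv g k := nth 0%N (nth [::] ginvT g) k.
Definition rotm g (m : seq bool) := [seq nth false m (ginv g k) | k <- iota 0 12].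
Definition sz (b : bool) : int := if b then 1 else -1.
Definition qzf g (i j : nat) : int := if pn g i == j then sz (sn g i) else 0.
Definition Qz g : 'M[int]_3 := \matrix_(i < 3, j < 3) qzf g i j.
Definition Qg (R : realType) g : 'M[R]_3 := map_mx intr (Qz g).

Lemma det3f (R : comRingType) (f : nat -> nat -> R) : \det (\matrix_(i < 3, j < 3) f i j) =
  f 0%N 0%N * (f 1%N 1%N * f 2%N 2%N - f 1%N 2%N * f 2%N 1%N) - f 0%N 1%N * (f 1%N 0%N * f 2%N 2%N - f 1%N 2%N * f 2%N 0%N)
  + f 0%N 2%N * (f 1%N 0%N * f 2%N 1%N - f 1%N 1%N * f 2%N 0%N).
Proof.
rewrite (expand_det_row _ 0) !big_ord_recr big_ord0 /= /cofactor.
rewrite !(expand_det_row _ 0) !big_ord_recr !big_ord0 /= /cofactor.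
rewrite !(expand_det_row _ 0) !big_ord_recr !big_ord0 /= /cofactor.
rewrite !det_mx00 !mxE /= !expr0 !expr1 /bump /=. ring.
Qed.

Lemma size_rotm g m : size (rotm g m) = 12%N.
Proof. by rewrite size_map size_iota. Qed.

Section Rot.
Variable R : realType.

Lemma sgR (b : bool) : (if b then 1 else -1 : R) = (sz b)%:~R.
Proof. by case: b. Qed.

Lemma cpt_inj u v : cpt R u = cpt R v -> u = v.
Proof.
move=> /rowP e; apply/ffunP => j; have := e j; rewrite !mxE.
case: (u j); case: (v j) => // h; lra.
Qed.

Lemma rot_img2 (Q : 'M[R]_3) t x y sx sy :
  cpt R sx = cpt R x *m Q + t -> cpt R sy = cpt R y *m Q + t ->
  rot_img Q t [set x; y] = [set sx; sy].
Proof.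
move=> ex ey; apply/setP => w; rewrite inE; apply/existsP/idP.
  case=> u /andP [hu /eqP e]; rewrite !inE in hu *.
  by case/orP: hu => /eqP eu; subst u; apply/orP; [left|right];
     apply/eqP; apply: cpt_inj; rewrite e ?ex ?ey.
rewrite !inE => /orP [] /eqP ->; [exists x|exists y]; by rewrite !inE eqxx ?orbT ?ex ?ey /=.
Qed.

Lemma rot_edge (Q : 'M[R]_3) t g k : (g < 24)%N -> (k < 12)%N ->
  (forall c, (c < 8)%N -> cpt R (vtx (gv g c)) = cpt R (vtx c) *m Q + t) ->
  rot_img Q t (edge (ginv g k)) = edge k.
Proof.
move=> hg hk H.
have chk : all (fun g => all (fun k => (ginv g k < 12)%N &&
   ((gv g (ea (ginv g k)) == ea k) && (gv g (eb (ginv g k)) == eb k) ||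
    (gv g (ea (ginv g k)) == eb k) && (gv g (eb (ginv g k)) == ea k))) (iota 0 12)) (iota 0 24) by vm_compute.
case/andP: (forall_lt (forall_lt chk hg) hk) => hk'.
rewrite /edge (rot_img2 (H _ (ea_lt hk')) (H _ (eb_lt hk'))).
by case/orP => /andP [/eqP -> /eqP ->] //; rewrite setUC.
Qed.

Lemma ginv_onto g k' : (g < 24)%N -> (k' < 12)%N -> exists2 k, (k < 12)%N & ginv g k = k'.
Proof.
move=> hg hk'.
have chk : all (fun g => all (fun k' => has (fun k => ginv g k == k') (iota 0 12)) (iota 0 12)) (iota 0 24) by vm_compute.
case/hasP: (forall_lt (forall_lt chk hg) hk') => k; rewrite mem_iota => hk /eqP e; by exists k.
Qed.

Lemma ginv_lt g k : (g < 24)%N -> (k < 12)%N -> (ginv g k < 12)%N.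
Proof.
move=> hg hk.
have chk : all (fun g => all (fun k => ginv g k < 12)%N (iota 0 12)) (iota 0 24) by vm_compute.
exact: (forall_lt (forall_lt chk hg) hk).
Qed.

Lemma rot_toS (Q : 'M[R]_3) t g m : (g < 24)%N ->
  (forall c, (c < 8)%N -> cpt R (vtx (gv g c)) = cpt R (vtx c) *m Q + t) ->
  [set rot_img Q t e | e in toS m] = toS (rotm g m).
Proof.
move=> hg H; apply/setP => e; apply/imsetP/toSP.
  case=> e' /toSP [k' [hk' hm] ->] ->.
  case: (ginv_onto hg hk') => k hk ek; exists k; last by rewrite -ek rot_edge.
  by split => //; rewrite (nth_map 0%N) ?size_iota // nth_iota // ek.
case=> k [hk]; rewrite (nth_map 0%N) ?size_iota // nth_iota // => hm ->.
exists (edge (ginv g k)); last by rewrite rot_edge.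
by apply/toSP; exists (ginv g k) => //; split => //; exact: ginv_lt.
Qed.

Lemma Qg_ok g : (g < 24)%N ->
  cube_rotation (Qg R g) 0 /\ forall c, (c < 8)%N -> cpt R (vtx (gv g c)) = cpt R (vtx c) *m Qg R g + 0.
Proof.
move=> hg.
have hv : forall c, (c < 8)%N -> cpt R (vtx (gv g c)) = cpt R (vtx c) *m Qg R g + 0.
  move=> c hc; apply/rowP => j; rewrite !mxE sum3 !mxE !ffunE !sgR -!intrM -!intrD.
  rewrite addr0; apply/eqP; rewrite eqr_int; apply/eqP.
  have chk : all (fun g => all (fun c => all (fun j =>
     sz (bit (gv g c) j) == sz (bit c 0) * qzf g 0 j + sz (bit c 1) * qzf g 1 j + sz (bit c 2) * qzf g 2 j)
     (iota 0 3)) (iota 0 8)) (iota 0 24) by vm_compute.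
  apply/eqP; exact: (forall_lt (forall_lt (forall_lt chk hg) hc) (ltn_ord j)).
split => //; split.
  split.
    rewrite /Qg map_trmx -map_mxM.
    have -> : Qz g *m (Qz g)^T = 1%:M.
      apply/matrixP => i k; rewrite !mxE sum3 !mxE.
      have chk : all (fun g => all (fun i => all (fun k =>
        qzf g i 0 * qzf g k 0 + qzf g i 1 * qzf g k 1 + qzf g i 2 * qzf g k 2 == (i == k)%:R)
        (iota 0 3)) (iota 0 3)) (iota 0 24) by vm_compute.
      apply/eqP; exact: (forall_lt (forall_lt (forall_lt chk hg) (ltn_ord i)) (ltn_ord k)).
    by rewrite map_mx1.
  rewrite /Qg det_map_mx /Qz det3f.
  have chk : all (fun g => let f := qzf g in
    f 0%N 0%N * (f 1%N 1%N * f 2%N 2%N - f 1%N 2%N * f 2%N 1%N) - f 0%N 1%N * (f 1%N 0%N * f 2%N 2%N - f 1%N 2%N * f 2%N 0%N)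
    + f 0%N 2%N * (f 1%N 0%N * f 2%N 1%N - f 1%N 1%N * f 2%N 0%N) == 1) (iota 0 24) by vm_compute.
  by rewrite (eqP (forall_lt chk hg)).
move=> v; move: v; apply: cvert_ind => c hc; exists (vtx (gv g c)); exact: hv.
Qed.
End Rot.
Definition hdz (x y : bool) : int := if x == y then 0 else sz x.
Definition qwf (w0 w1 w2 w4 : nat) (i j : nat) : int :=
  hdz (bit (nth 0%N [:: w1; w2; w4] i) j) (bit w0 j).
Definition Ew n c w0 w1 w2 w4 j : bool :=
  sz (bit n j) == (sz (bit c 0) - sz (bit 0 0)) * qwf w0 w1 w2 w4 0 j
    + (sz (bit c 1) - sz (bit 0 1)) * qwf w0 w1 w2 w4 1 j
    + (sz (bit c 2) - sz (bit 0 2)) * qwf w0 w1 w2 w4 2 j + sz (bit w0 j).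
Definition detw w0 w1 w2 w4 : int := let f := qwf w0 w1 w2 w4 in
  f 0%N 0%N * (f 1%N 1%N * f 2%N 2%N - f 1%N 2%N * f 2%N 1%N) - f 0%N 1%N * (f 1%N 0%N * f 2%N 2%N - f 1%N 2%N * f 2%N 0%N)
  + f 0%N 2%N * (f 1%N 0%N * f 2%N 1%N - f 1%N 1%N * f 2%N 0%N).

Fixpoint lall (p : nat -> bool) (s : seq nat) : bool :=
  match s with [::] => true | x :: s' => if p x then lall p s' else false end.
Fixpoint lhas (p : nat -> bool) (s : seq nat) : bool :=
  match s with [::] => false | x :: s' => if p x then true else lhas p s' end.
Lemma lallE p s : lall p s = all p s.
Proof. by elim: s => //= x s ->; case: (p x). Qed.
Lemma lhasE p s : lhas p s = has p s.
Proof. by elim: s => //= x s ->; case: (p x). Qed.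

Definition chk2 := lall (fun w0 => lall (fun w1 => lall (fun w2 => lall (fun w4 =>
  if detw w0 w1 w2 w4 == 1 then
  if lall (fun c => lhas (fun n => lall (fun j => Ew n c w0 w1 w2 w4 j) (iota 0 3)) (iota 0 8)) (iota 0 8) then
  lhas (fun g => lall (fun c => lall (fun n => if lall (fun j => Ew n c w0 w1 w2 w4 j) (iota 0 3) then (gv g c == n) else true)
     (iota 0 8)) (iota 0 8)) (iota 0 24) else true else true) (iota 0 8)) (iota 0 8)) (iota 0 8)) (iota 0 8).

Lemma chk2_ok : chk2.
Proof. vm_compute. reflexivity. Qed.
Lemma lall_lt (P : nat -> bool) N : lall P (iota 0 N) -> forall k, (k < N)%N -> P k.
Proof. rewrite lallE; exact: forall_lt. Qed.

Section Cls.
Variable R : realType.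

Lemma classify (Q : 'M[R]_3) t : cube_rotation Q t ->
  exists2 g, (g < 24)%N & forall c, (c < 8)%N -> cpt R (vtx (gv g c)) = cpt R (vtx c) *m Q + t.
Proof.
case=> [[hO hdet] hv].
pose sig c := odflt (vtx 0) [pick w | cpt R w == cpt R (vtx c) *m Q + t].
have sigP c : cpt R (sig c) = cpt R (vtx c) *m Q + t.
  rewrite /sig; case: pickP => [w /eqP //|none].
  by case: (hv (vtx c)) => w e; have := none w; rewrite e eqxx.
pose n c := unvtx (sig c).
have nP c : cpt R (vtx (n c)) = cpt R (vtx c) *m Q + t by rewrite unvtxK sigP.
have nlt c : (n c < 8)%N by apply: unvtx_lt.
have key c : (cpt R (vtx c) - cpt R (vtx 0)) *m Q = cpt R (vtx (n c)) - cpt R (vtx (n 0)).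
  by rewrite !nP mulmxBl opprD addrACA subrr addr0.
have hQ : Q = map_mx intr (\matrix_(i < 3, j < 3) qwf (n 0) (n 1) (n 2) (n 4) i j).
  apply/matrixP => i j; rewrite !mxE /qwf.
  case: (ord3P i) => ->.
  - have := key 1%N; move/rowP/(_ j); rewrite !mxE sum3 !mxE !ffunE /=.
    by case: (bit (n 1%N) j); case: (bit (n 0%N) j) => /= h; rewrite /hdz /sz /= ?(rmorph0, rmorphN, rmorph1); lra.
  - have := key 2%N; move/rowP/(_ j); rewrite !mxE sum3 !mxE !ffunE /=.
    by case: (bit (n 2%N) j); case: (bit (n 0%N) j) => /= h; rewrite /hdz /sz /= ?(rmorph0, rmorphN, rmorph1); lra.
  - have := key 4%N; move/rowP/(_ j); rewrite !mxE sum3 !mxE !ffunE /=.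
    by case: (bit (n 4%N) j); case: (bit (n 0%N) j) => /= h; rewrite /hdz /sz /= ?(rmorph0, rmorphN, rmorph1); lra.
have hdw : detw (n 0) (n 1) (n 2) (n 4) = 1.
  move: hdet; rewrite hQ det_map_mx det3f => /eqP.
  have h1 : (1 : R) = (1 : int)%:~R by rewrite rmorph1.
  by rewrite h1 eqr_int => /eqP.
have hE c j : (c < 8)%N -> (j < 3)%N -> Ew (n c) c (n 0) (n 1) (n 2) (n 4) j.
  move=> hc hj.
  have e : cpt R (vtx (n c)) = (cpt R (vtx c) - cpt R (vtx 0)) *m Q + cpt R (vtx (n 0)).
    by rewrite key addrNK.
  move: e; rewrite hQ => /rowP /(_ (Ordinal hj)); rewrite !mxE sum3 !mxE !ffunE !sgR.
  rewrite /= => h; rewrite /Ew -(eqr_int R) !(rmorphD, rmorphM, rmorphB) /= !rmorphN rmorph1.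
  apply/eqP; move: h; lra.
have := lall_lt (lall_lt (lall_lt (lall_lt chk2_ok (nlt 0%N)) (nlt 1%N)) (nlt 2%N)) (nlt 4%N).
rewrite hdw eqxx.
have -> : lall (fun c => lhas (fun n' => lall (fun j => Ew n' c (n 0) (n 1) (n 2) (n 4) j) (iota 0 3)) (iota 0 8)) (iota 0 8).
  rewrite lallE; apply/allP => c; rewrite mem_iota => /andP [_ hc]; rewrite lhasE; apply/hasP.
  exists (n c); rewrite ?mem_iota ?nlt //; rewrite lallE; apply/allP => j; rewrite mem_iota => hj.
  exact: hE.
rewrite lhasE => /hasP [g]; rewrite mem_iota => /andP [_ hg] hall; exists g => // c hc.
have := lall_lt (lall_lt hall hc) (nlt c).
have -> : lall (fun j => Ew (n c) c (n 0) (n 1) (n 2) (n 4) j) (iota 0 3).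
  by rewrite lallE; apply/allP => j; rewrite mem_iota => hj; exact: hE.
by move/eqP ->.
Qed.
End Cls.
Definition repsM : seq (seq bool) := [:: [:: false; false; false; true; false; false; false; true; false; false; false; true];
  [:: false; false; false; true; false; false; false; true; false; false; true; false];
  [:: false; false; false; true; false; false; false; true; false; false; true; true];
  [:: false; false; false; true; false; false; false; true; false; true; false; false];
  [:: false; false; false; true; false; false; false; true; false; true; false; true];
  [:: false; false; false; true; false; false; false; true; false; true; true; false];
  [:: false; false; false; true; false; false; false; true; false; true; true; true];
  [:: false; false; false; true; false; false; true; true; false; false; true; true];
  [:: false; false; false; true; false; false; true; true; false; true; false; false];
  [:: false; false; false; true; false; false; true; true; false; true; false; true];
  [:: false; false; false; true; false; false; true; true; false; true; true; false];
  [:: false; false; false; true; false; false; true; true; false; true; true; true];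
  [:: false; false; false; true; false; false; true; true; true; false; false; false];
  [:: false; false; false; true; false; false; true; true; true; false; false; true];
  [:: false; false; false; true; false; false; true; true; true; false; true; false];
  [:: false; false; false; true; false; false; true; true; true; false; true; true];
  [:: false; false; false; true; false; false; true; true; true; true; false; false];
  [:: false; false; false; true; false; false; true; true; true; true; false; true];
  [:: false; false; false; true; false; false; true; true; true; true; true; false];
  [:: false; false; false; true; false; false; true; true; true; true; true; true];
  [:: false; false; false; true; false; true; false; false; false; true; true; true];
  [:: false; false; false; true; false; true; false; true; false; true; false; true];
  [:: false; false; false; true; false; true; false; true; false; true; true; false];
  [:: false; false; false; true; false; true; false; true; false; true; true; true];
  [:: false; false; false; true; false; true; true; false; false; true; false; true];
  [:: false; false; false; true; false; true; true; false; false; true; true; true];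
  [:: false; false; false; true; false; true; true; false; true; false; false; true];
  [:: false; false; false; true; false; true; true; false; true; false; true; true];
  [:: false; false; false; true; false; true; true; false; true; true; false; true];
  [:: false; false; false; true; false; true; true; false; true; true; true; true];
  [:: false; false; false; true; false; true; true; true; false; true; false; false];
  [:: false; false; false; true; false; true; true; true; false; true; false; true];
  [:: false; false; false; true; false; true; true; true; false; true; true; false];
  [:: false; false; false; true; false; true; true; true; false; true; true; true];
  [:: false; false; false; true; false; true; true; true; true; false; true; true];
  [:: false; false; false; true; false; true; true; true; true; true; false; false];
  [:: false; false; false; true; false; true; true; true; true; true; false; true];
  [:: false; false; false; true; false; true; true; true; true; true; true; false];
  [:: false; false; false; true; false; true; true; true; true; true; true; true];
  [:: false; false; false; true; true; false; false; true; false; true; true; false];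
  [:: false; false; false; true; true; false; false; true; false; true; true; true];
  [:: false; false; false; true; true; false; false; true; true; true; true; false];
  [:: false; false; false; true; true; false; false; true; true; true; true; true];
  [:: false; false; false; true; true; false; true; true; false; true; true; true];
  [:: false; false; false; true; true; false; true; true; true; true; false; false];
  [:: false; false; false; true; true; false; true; true; true; true; false; true];
  [:: false; false; false; true; true; false; true; true; true; true; true; false];
  [:: false; false; false; true; true; false; true; true; true; true; true; true];
  [:: false; false; false; true; true; true; false; false; true; true; true; true];
  [:: false; false; false; true; true; true; false; true; true; true; true; false];
  [:: false; false; false; true; true; true; false; true; true; true; true; true];
  [:: false; false; false; true; true; true; true; false; true; true; false; true];
  [:: false; false; false; true; true; true; true; false; true; true; true; true];
  [:: false; false; false; true; true; true; true; true; true; true; true; true];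
  [:: false; false; true; true; false; false; true; true; false; false; true; true];
  [:: false; false; true; true; false; false; true; true; false; true; true; false];
  [:: false; false; true; true; false; false; true; true; false; true; true; true];
  [:: false; false; true; true; false; false; true; true; true; true; true; true];
  [:: false; false; true; true; false; true; false; true; false; false; true; true];
  [:: false; false; true; true; false; true; false; true; false; true; true; false];
  [:: false; false; true; true; false; true; false; true; false; true; true; true];
  [:: false; false; true; true; false; true; false; true; true; false; false; true];
  [:: false; false; true; true; false; true; false; true; true; false; true; true];
  [:: false; false; true; true; false; true; false; true; true; true; false; false];
  [:: false; false; true; true; false; true; false; true; true; true; false; true];
  [:: false; false; true; true; false; true; false; true; true; true; true; false];
  [:: false; false; true; true; false; true; false; true; true; true; true; true];
  [:: false; false; true; true; false; true; true; false; false; true; false; true];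
  [:: false; false; true; true; false; true; true; false; false; true; true; false];
  [:: false; false; true; true; false; true; true; false; false; true; true; true];
  [:: false; false; true; true; false; true; true; false; true; false; false; true];
  [:: false; false; true; true; false; true; true; false; true; false; true; true];
  [:: false; false; true; true; false; true; true; false; true; true; false; true];
  [:: false; false; true; true; false; true; true; false; true; true; true; false];
  [:: false; false; true; true; false; true; true; false; true; true; true; true];
  [:: false; false; true; true; false; true; true; true; false; true; false; true];
  [:: false; false; true; true; false; true; true; true; false; true; true; false];
  [:: false; false; true; true; false; true; true; true; false; true; true; true];
  [:: false; false; true; true; false; true; true; true; true; false; false; true];
  [:: false; false; true; true; false; true; true; true; true; false; true; true];
  [:: false; false; true; true; false; true; true; true; true; true; false; true];
  [:: false; false; true; true; false; true; true; true; true; true; true; false];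
  [:: false; false; true; true; false; true; true; true; true; true; true; true];
  [:: false; false; true; true; true; true; false; false; false; true; true; true];
  [:: false; false; true; true; true; true; false; false; true; false; true; true];
  [:: false; false; true; true; true; true; false; false; true; true; true; true];
  [:: false; false; true; true; true; true; false; true; false; true; true; false];
  [:: false; false; true; true; true; true; false; true; false; true; true; true];
  [:: false; false; true; true; true; true; false; true; true; false; false; true];
  [:: false; false; true; true; true; true; false; true; true; false; true; true];
  [:: false; false; true; true; true; true; false; true; true; true; false; true];
  [:: false; false; true; true; true; true; false; true; true; true; true; false];
  [:: false; false; true; true; true; true; false; true; true; true; true; true];
  [:: false; false; true; true; true; true; true; true; false; true; true; false];
  [:: false; false; true; true; true; true; true; true; false; true; true; true];
  [:: false; false; true; true; true; true; true; true; true; false; false; true];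
  [:: false; false; true; true; true; true; true; true; true; false; true; true];
  [:: false; false; true; true; true; true; true; true; true; true; true; true];
  [:: false; true; true; false; false; true; true; false; false; true; true; false];
  [:: false; true; true; false; false; true; true; false; false; true; true; true];
  [:: false; true; true; false; false; true; true; false; true; false; true; true];
  [:: false; true; true; false; false; true; true; false; true; true; false; true];
  [:: false; true; true; false; false; true; true; false; true; true; true; true];
  [:: false; true; true; false; false; true; true; true; false; true; true; true];
  [:: false; true; true; false; false; true; true; true; true; false; true; true];
  [:: false; true; true; false; false; true; true; true; true; true; false; true];
  [:: false; true; true; false; false; true; true; true; true; true; true; false];
  [:: false; true; true; false; false; true; true; true; true; true; true; true];
  [:: false; true; true; false; true; false; true; true; false; true; true; true];
  [:: false; true; true; false; true; false; true; true; true; true; false; true];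
  [:: false; true; true; false; true; false; true; true; true; true; true; true];
  [:: false; true; true; false; true; true; true; true; true; true; true; true];
  [:: false; true; true; true; false; true; true; true; false; true; true; true];
  [:: false; true; true; true; false; true; true; true; true; false; true; true];
  [:: false; true; true; true; false; true; true; true; true; true; false; true];
  [:: false; true; true; true; false; true; true; true; true; true; true; false];
  [:: false; true; true; true; false; true; true; true; true; true; true; true];
  [:: false; true; true; true; true; true; false; true; true; true; true; false];
  [:: false; true; true; true; true; true; false; true; true; true; true; true];
  [:: false; true; true; true; true; true; true; false; true; true; false; true];
  [:: false; true; true; true; true; true; true; false; true; true; true; true];
  [:: false; true; true; true; true; true; true; true; true; true; true; true]].

Fixpoint lallS (p : seq bool -> bool) (s : seq (seq bool)) : bool :=
  match s with [::] => true | x :: s' => if p x then lallS p s' else false end.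
Lemma lallSE p s : lallS p s = all p s.
Proof. by elim: s => //= x s ->; case: (p x). Qed.

Definition good m := hask m && ~~ allk m && conn_b m && ~~ planarcert m.
Fixpoint lmem (x : seq bool) (s : seq (seq bool)) : bool :=
  match s with [::] => false | y :: s' => if x == y then true else lmem x s' end.
Lemma lmemE x s : lmem x s = (x \in s).
Proof. elim: s => //= y s ->; rewrite in_cons eq_sym; by case: (x == y). Qed.
Fixpoint lexle (a b : seq bool) : bool :=
  match a, b with x :: a', y :: b' => if x == y then lexle a' b' else ~~ x | _, _ => true end.
Fixpoint bestg m (gs : seq nat) (g0 : nat) : nat :=
  match gs with [::] => g0 | g :: gs' => bestg m gs' (if lexle (rotm g0 m) (rotm g m) then g0 else g) end.
Definition cang m := bestg m (iota 1 23) 0.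
Definition chk1 := lallS (fun m => let r := reach m 8 in
  if closedE' m r && (hask m ==> Vn m (root m)) then
  (if hask m && ~~ allk m && conn_b' m r && ~~ planarcert m then
     (cang m < 24)%N && lmem (rotm (cang m) m) repsM else true) else false) (masks 12).
Definition chk3 := lall (fun i => lall (fun j => if i == j then true else
  lall (fun g => rotm g (nth [::] repsM i) != nth [::] repsM j) (iota 0 24)) (iota 0 122)) (iota 0 122).
Definition chk4 := all (fun m => (size m == 12) && hask m && ~~ allk m && conn_b m && dirs3 m) repsM.

Lemma chk1_ok : chk1. Proof. vm_compute. reflexivity. Qed.
Lemma chk3_ok : chk3. Proof. vm_compute. reflexivity. Qed.
Lemma chk4_ok : chk4. Proof. vm_compute. reflexivity. Qed.
Lemma toS_inj m m' : size m = 12%N -> size m' = 12%N -> toS m = toS m' -> m = m'.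
Proof.
move=> hm hm' e; apply: (@eq_from_nth _ false); first by rewrite hm hm'.
by move=> k; rewrite hm => hk; rewrite -!mem_toS // e.
Qed.

Lemma masks12 (S : {set {set cvert}}) : maskOf S \in masks 12.
Proof. by rewrite -(size_maskOf S) masks_size. Qed.

Lemma chk1_m m : m \in masks 12 ->
  if closedE' m (reach m 8) && (hask m ==> Vn m (root m)) then
  (if hask m && ~~ allk m && conn_b' m (reach m 8) && ~~ planarcert m then
     (cang m < 24)%N && lmem (rotm (cang m) m) repsM else true) else false.
Proof.
move=> hm; have := chk1_ok; rewrite /chk1 lallSE.
move/allP => H; exact: (H m hm).
Qed.

Theorem mainTheorem2 (R : realType) :
  exists reps : seq {set {set cvert}},
    [/\ size reps = 122%N,
        forall S, S \in reps -> incomplete_open R S,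
        forall i j, (i < size reps)%N -> (j < size reps)%N -> i <> j ->
          ~ same_orbit R (nth set0 reps i) (nth set0 reps j)
      & forall S, incomplete_open R S -> exists2 S', S' \in reps & same_orbit R S S'].
Proof.
exists (map toS repsM); split.
- by rewrite size_map.
- move=> S /mapP [m hm ->].
  have /andP [/andP [/andP [/andP [/eqP hs hh] ha] hc] hd] := allP chk4_ok m hm.
  split.
  + by apply/subsetP => e /toSP [k [hk _] ->]; exact: edge_cube.
  + case/hasP: hh => k; rewrite mem_iota => /andP [_ hk] hmk.
    by apply/set0Pn; exists (edge k); rewrite mem_toS.
  + move: ha; rewrite /allk -has_predC => /hasP [k]; rewrite mem_iota => /andP [_ hk] /= hmk.
    apply/eqP => e; have := edge_cube hk; by rewrite -e mem_toS // (negbTE hmk).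
  + exact: conn_ok.
  + exact: nonplanar_ok.
- rewrite size_map => i j hi hj hij.
  rewrite !(nth_map [::]) //.
  case=> Q [t [hrot e]].
  case: (classify hrot) => g hg H.
  move: e; rewrite (rot_toS _ hg H).
  have sz12 k : (k < size repsM)%N -> size (nth [::] repsM k) = 12%N.
    move=> hk; have := allP chk4_ok _ (mem_nth [::] hk).
    by case/andP => /andP [/andP [/andP [/eqP -> _] _] _] _.
  move/toS_inj => /(_ (sz12 _ hj) (size_rotm _ _)) e.
  have := lall_lt (lall_lt chk3_ok hi) hj.
  have -> : (i == j) = false by apply/eqP.
  move/lall_lt => /(_ _ hg); by rewrite e eqxx.
- move=> S [hsub hne hnc hcon hnp].
  have eS := toS_maskOf hsub.
  set m := maskOf S in eS.
  have hsz : size m = 12%N := size_maskOf S.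
  have hk : hask m.
    case/set0Pn: hne => e he; case: (cube_sub (subsetP hsub _ he)) => k hk ek.
    apply/hasP; exists k; rewrite ?mem_iota //.
    by rewrite nth_maskOf // -ek.
  have hm : m \in masks 12 by apply: masks12.
  clearbody m.
  have := chk1_m hm.
  case: ifP => // /andP [hcl hr].
  have hconn : conn_b' m (reach m 8).
    by apply: (conn_need hcl hr hk); rewrite -eS.
  have hall : ~~ allk m.
    apply/negP => ha; move/negP: hnc; apply; apply/eqP; rewrite eS; apply/eqP.
    rewrite eqEsubset; apply/andP; split; first by rewrite -eS.
    apply/subsetP => e /cube_sub [k hk' ->]; rewrite mem_toS //; exact: (forall_lt ha hk').
  have hpl : ~~ planarcert m.
    by apply/negP => /(planar_cert R); rewrite -eS.
  rewrite hk hall hconn hpl => /andP [hg hmem].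
  exists (toS (rotm (cang m) m)); first by apply: map_f; rewrite -lmemE.
  case: (Qg_ok R hg) => hrot hv; exists (Qg R (cang m)), 0; split => //.
  by rewrite {1}eS (rot_toS _ hg hv).
Qed.
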